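(* Let $\mathcal{H},\mathcal{K}$ be complex Hilbert spaces with $\dim\mathcal{H}>0$, let $(f_*,f^* ):(\mathsf{P}(\mathcal{H}),\mathsf{L}(\mathcal{H}),\bar e_{\mathcal{H}})\to(\mathsf{P}(\mathcal{K}),\mathsf{L}(\mathcal{K}),\bar e_{\mathcal{K}})$ be a Chu morphism, and let $(g,\sigma)$ be a semilinear map $\mathcal{H}\to\mathcal{K}$ with $g(\psi)\ne0$ and $f_*([\psi])=[g(\psi)]$ for all nonzero $\psi\in\mathcal{H}$. If the field endomorphism $\sigma:\mathbb{C}\to\mathbb{C}$ is surjective, then $g$ is surjective.
   Context: A Chu morphism $(X,A,e)\to(X',A',e')$ between Chu spaces over $[0,1]$ (with $e:X\times A\to[0,1]$) is a pair $(f_*:X\to X',f^*:A'\to A)$ with $e(x,f^*(a'))=e'(f_*(x),a')$ for all $x,a'$. For a complex Hilbert space $\mathcal{H}$: $\mathsf{L}(\mathcal{H})$ is the set of closed subspaces, $P_S$ the orthogonal projector onto $S$, $\mathsf{P}(\mathcal{H})$ the set of rays $[\psi]=\{\lambda\psi:\lambda\in\mathbb{C}\}$, $\psi\ne0$, and $\bar e_{\mathcal{H}}([\psi],S)=\|P_S\psi\|^2/\|\psi\|^2$. A semilinear map $(g,\sigma):V_1\to V_2$ consists of a field homomorphism $\sigma:\mathbb{C}\to\mathbb{C}$ and an additive map $g$ with $g(\lambda v)=\sigma(\lambda)g(v)$. *)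

(* Defs.v *)
From Stdlib Require Import Rdefinitions ClassicalEpsilon.
From HB Require Import structures.
From mathcomp Require Import all_boot all_order all_algebra.
From mathcomp Require Import complex Rstruct.
Set Implicit Arguments. Unset Strict Implicit. Unset Printing Implicit Defensive.
Import Order.TTheory GRing.Theory Num.Theory.
Local Open Scope ring_scope.

Notation CC := (Rdefinitions.R[i]).

(* Convention: the inner product is linear in the first argument and
   conjugate-linear in the second; ||v||^2 = Re <v,v>. *)
Record hilbert := Hilbert {
  hcar :> lmodType CC;
  inner : hcar -> hcar -> CC;
  inner_conj : forall u v : hcar, inner u v = (inner v u)^*;
  inner_addl : forall u v w : hcar, inner (u + v) w = inner u w + inner v w;
  inner_scalel : forall (a : CC) (u v : hcar), inner (a *: u) v = a * inner u v;
  inner_ge0 : forall v : hcar, 0 <= inner v v;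
  inner_eq0 : forall v : hcar, inner v v = 0 -> v = 0;
  hcomplete : forall u : nat -> hcar,
    (forall eps : Rdefinitions.R, 0 < eps -> exists N : nat, forall m n : nat, (N <= m)%N -> (N <= n)%N ->
        complex.Re (inner (u m - u n) (u m - u n)) < eps) ->
    exists l : hcar, forall eps : Rdefinitions.R, 0 < eps -> exists N : nat, forall n : nat, (N <= n)%N ->
        complex.Re (inner (u n - l) (u n - l)) < eps
}.

Section HilbertDefs.
Variable H : hilbert.

Definition normsq (v : H) : Rdefinitions.R := complex.Re (inner v v).

Definition is_closed_subspace (S : H -> Prop) : Prop :=
  [/\ S 0,
      (forall u v, S u -> S v -> S (u + v)),
      (forall (a : CC) v, S v -> S (a *: v)) &
      (forall (u : nat -> H) (l : H), (forall n, S (u n)) ->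
         (forall eps : Rdefinitions.R, 0 < eps -> exists N : nat, forall n : nat, (N <= n)%N ->
             normsq (u n - l) < eps) -> S l)].

Definition closed_subspaces := {S : H -> Prop | is_closed_subspace S}.

(* the orthogonal projector P_S: P_S psi is the (unique, by the projection
   theorem) vector p in S with psi - p orthogonal to S *)
Definition hproj (S : closed_subspaces) (psi : H) : H :=
  epsilon (inhabits (0 : H))
    (fun p => proj1_sig S p /\ forall s, proj1_sig S s -> inner (psi - p) s = 0).

Definition hline (psi : H) : H -> Prop := fun v => exists lam : CC, v = lam *: psi.

Definition hray := {r : H -> Prop | exists psi : H, psi != 0 /\ r = hline psi}.

Definition mkray (psi : H) (hpsi : psi != 0) : hray :=
  exist _ (hline psi) (ex_intro _ psi (conj hpsi erefl)).

Definition ray_rep (r : hray) : H :=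
  epsilon (inhabits (0 : H)) (fun psi => psi != 0 /\ proj1_sig r = hline psi).

(* bar e_H([psi], S) = ||P_S psi||^2 / ||psi||^2 (independent of the representative) *)
Definition ebar (r : hray) (S : closed_subspaces) : Rdefinitions.R :=
  normsq (hproj S (ray_rep r)) / normsq (ray_rep r).

End HilbertDefs.

Definition chu_morphism (X A X' A' : Type) (e : X -> A -> Rdefinitions.R)
  (e' : X' -> A' -> Rdefinitions.R) (fs : X -> X') (fu : A' -> A) : Prop :=
  forall (x : X) (a' : A'), e x (fu a') = e' (fs x) a'.

Definition semilinear_map (H K : hilbert) (sigma : {rmorphism CC -> CC}) (g : H -> K) : Prop :=
  (forall u v : H, g (u + v) = g u + g v) /\
  (forall (lam : CC) (v : H), g (lam *: v) = sigma lam *: g v).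

(* Main.v *)
Require Import Defs.
From HB Require Import structures.
From mathcomp Require Import all_boot all_order all_algebra.
From mathcomp Require Import complex Rstruct.
From Stdlib Require Import ClassicalEpsilon Classical.
Import Order.TTheory GRing.Theory Num.Theory.
Local Open Scope ring_scope.
Set Implicit Arguments. Unset Strict Implicit.
Lemma myRdivE (x y : Rdefinitions.R) : Rdefinitions.Rdiv x y = x / y.
Proof. by []. Qed.
Lemma inner_addr (H : hilbert) (u v w : H) : inner u (v + w) = inner u v + inner u w.
Proof. by rewrite inner_conj inner_addl rmorphD (inner_conj u v) (inner_conj u w). Qed.

Lemma inner_scaler (H : hilbert) (a : CC) (u v : H) : inner u (a *: v) = a^* * inner u v.
Proof. by rewrite inner_conj inner_scalel rmorphM (inner_conj u v). Qed.

Lemma inner0l (H : hilbert) (v : H) : inner 0 v = 0.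
Proof. by rewrite -(scale0r (0 : H)) inner_scalel mul0r. Qed.

Lemma inner0r (H : hilbert) (v : H) : inner v 0 = 0.
Proof. by rewrite inner_conj inner0l conjC0. Qed.

Lemma innerNl (H : hilbert) (u v : H) : inner (- u) v = - inner u v.
Proof. by rewrite -scaleN1r inner_scalel mulN1r. Qed.

Lemma innerBl (H : hilbert) (u v w : H) : inner (u - v) w = inner u w - inner v w.
Proof. by rewrite inner_addl innerNl. Qed.

Lemma innerNr (H : hilbert) (u v : H) : inner u (- v) = - inner u v.
Proof. by rewrite -scaleN1r inner_scaler conjCN1 mulN1r. Qed.

Lemma innerBr (H : hilbert) (u v w : H) : inner u (v - w) = inner u v - inner u w.
Proof. by rewrite inner_addr innerNr. Qed.

Lemma inner_self (H : hilbert) (v : H) : inner v v = ((normsq v)%:C)%C.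
Proof. rewrite /normsq; have := inner_ge0 v; case: (inner v v) => a b /ger0_Im /= ->. done. Qed.

Lemma normsq_ge0 (H : hilbert) (v : H) : 0 <= normsq v.
Proof. by rewrite -ler0c -inner_self; exact: inner_ge0. Qed.

Lemma normsq_eq0 (H : hilbert) (v : H) : normsq v = 0 -> v = 0.
Proof. by move=> h; apply: inner_eq0; rewrite inner_self h. Qed.

Lemma inner_self_neq0 (H : hilbert) (v : H) : v != 0 -> inner v v != 0.
Proof. by move=> h; apply/eqP => /inner_eq0 /eqP; rewrite (negbTE h). Qed.

Lemma normsq_neq0 (H : hilbert) (v : H) : v != 0 -> normsq v != 0.
Proof. by move=> h; apply/eqP => /normsq_eq0 /eqP; rewrite (negbTE h). Qed.

Lemma pythagoras (H : hilbert) (x y : H) : inner x y = 0 ->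
  normsq (x + y) = normsq x + normsq y.
Proof.
move=> h; apply: complexI; rewrite rmorphD /= -!inner_self inner_addl !inner_addr.
by rewrite h (inner_conj y x) h conjC0 !addr0 add0r.
Qed.
Lemma ray_repP (H : hilbert) (r : hray H) :
  ray_rep r != 0 /\ proj1_sig r = hline (ray_rep r).
Proof.
apply: (epsilon_spec (inhabits (0:H)) (fun psi => psi != 0 /\ proj1_sig r = hline psi)).
by case: r => r [psi [hp e]]; exists psi.
Qed.

Lemma hprojE (H : hilbert) (S : closed_subspaces H) (psi p : H) :
  proj1_sig S p -> (forall s, proj1_sig S s -> inner (psi - p) s = 0) ->
  hproj S psi = p.
Proof.
move=> Sp hp.
have [Sq hq] : (proj1_sig S (hproj S psi) /\
   forall s, proj1_sig S s -> inner (psi - hproj S psi) s = 0).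
  by apply: (epsilon_spec (inhabits (0:H)) (fun p => proj1_sig S p /\ forall s, proj1_sig S s -> inner (psi - p) s = 0)); exists p.
move: Sq hq; set q := hproj S psi => Sq hq.
have [S0 Sadd Sscale _] := proj2_sig S.
have Sd : proj1_sig S (q - p).
  by apply: Sadd => //; rewrite -scaleN1r; apply: Sscale.
apply/eqP; rewrite -subr_eq0; apply/eqP; apply: inner_eq0.
have e : q - p = (psi - p) - (psi - q) by rewrite opprB [RHS]addrC [RHS]addrA subrK.
by rewrite {1}e innerBl hp // hq // subrr.
Qed.
Lemma normsqN (H : hilbert) (v : H) : normsq (- v) = normsq v.
Proof. by rewrite /normsq innerNl innerNr opprK. Qed.

Lemma hline_closed (H : hilbert) (w : H) (wnz : w != 0) : is_closed_subspace (hline w).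
Proof.
have ww := inner_self_neq0 wnz.
split.
- by exists 0; rewrite scale0r.
- by move=> u v [a ->] [b ->]; exists (a + b); rewrite scalerDl.
- by move=> a v [b ->]; exists (a * b); rewrite scalerA.
move=> u l hu hcv.
set c := inner l w / inner w w; set r := l - c *: w.
have rw : inner r w = 0.
  by rewrite /r innerBl inner_scalel /c divfK // subrr.
suff r0 : r = 0.
  by exists c; rewrite -[l](subrK (c *: w)) -/r r0 add0r.
apply: normsq_eq0.
have := normsq_ge0 r; rewrite le_eqVlt => /orP [/eqP <- //|pos].
have [N hN] := hcv _ pos.
have := hN N (leqnn N); case: (hu N) => lam ->.
have e : lam *: w - l = (lam - c) *: w + - r.
  by rewrite scalerBl opprB addrA subrK.
rewrite e pythagoras ?normsqN.
  by move=> h; have := normsq_ge0 ((lam - c) *: w); rewrite -(lerD2r (normsq r)) add0r leNgt h.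
by rewrite inner_scalel innerNr inner_conj rw conjC0 oppr0 mulr0.
Qed.
Lemma normsq0 (H : hilbert) : normsq (0 : H) = 0.
Proof. by rewrite /normsq inner0l. Qed.

Lemma hproj_line (K : hilbert) (w : K) (wnz : w != 0) (chi : K) :
  hproj (exist _ (hline w) (hline_closed wnz)) chi = (inner chi w / inner w w) *: w.
Proof.
have ww := inner_self_neq0 wnz.
apply: hprojE => /=; first by exists (inner chi w / inner w w).
move=> s [lam ->].
by rewrite inner_scaler innerBl inner_scalel divfK // subrr mulr0.
Qed.

Lemma key (H K : hilbert)
  (fs : hray H -> hray K) (fu : closed_subspaces K -> closed_subspaces H)
  (hchu : chu_morphism (@ebar H) (@ebar K) fs fu)
  (sigma : {rmorphism CC -> CC}) (g : H -> K)
  (hg : semilinear_map sigma g)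
  (hfs : forall (psi : H) (hpsi : psi != 0), proj1_sig (fs (mkray hpsi)) = hline (g psi))
  (hsigma : forall z : CC, exists w : CC, sigma w = z) (w : K) (wnz : w != 0) :
  (exists v, g v = w) \/ (forall psi, inner (g psi) w = 0).
Proof.
case: hg => gadd gscale.
have g0 : g 0 = 0 by rewrite -(scale0r (0:H)) gscale rmorph0 scale0r.
have ww := inner_self_neq0 wnz.
pose SL := exist _ (hline w) (hline_closed wnz) : closed_subspaces K.
have rhs : forall psi (hpsi : psi != 0), exists chi a b,
   [/\ chi != 0, chi = a *: g psi, g psi = b *: chi &
   ebar (fs (mkray hpsi)) SL = normsq ((inner chi w / inner w w) *: w) / normsq chi].
  move=> psi hpsi; have [cnz ce] := ray_repP (fs (mkray hpsi)).
  move: cnz ce; rewrite /ebar; set chi := ray_rep _ => cnz ce.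
  rewrite hfs in ce.
  have : hline chi chi by exists 1; rewrite scale1r.
  rewrite -ce => -[a ea].
  have : hline (g psi) (g psi) by exists 1; rewrite scale1r.
  rewrite ce => -[b eb].
  exists chi, a, b; split => //.
  by rewrite hproj_line.
have [T0 Tadd Tsc _] := proj2_sig (fu SL).
case: (classic (exists phi, proj1_sig (fu SL) phi /\ phi != 0)) => [[phi [Tphi phinz]] | hT].
- left.
  have lhs : ebar (mkray phinz) (fu SL) = 1.
    have [pnz pe] := ray_repP (mkray phinz).
    move: pnz pe; rewrite /ebar; set phi' := ray_rep _ => pnz pe.
    have : hline phi' phi' by exists 1; rewrite scale1r.
    rewrite -pe /= => -[mu emu].
    have Tphi' : proj1_sig (fu SL) phi' by rewrite emu; exact: Tsc.
    rewrite (hprojE Tphi'); last by move=> s _; rewrite subrr inner0l.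
    by rewrite myRdivE divff // normsq_neq0.
  have [chi [a [b [cnz ea eb e4]]]] := rhs phi phinz.
  have := hchu (mkray phinz) SL; rewrite lhs e4 ?myRdivE => h.
  set c := inner chi w / inner w w in h.
  have hn : normsq (c *: w) = normsq chi.
    by rewrite -[LHS](divfK (normsq_neq0 cnz)) -h mul1r.
  have hort : inner (chi - c *: w) (c *: w) = 0.
    by rewrite inner_scaler innerBl inner_scalel /c divfK // subrr mulr0.
  have := pythagoras hort; rewrite subrK hn => e'.
  have n0 : normsq (chi - c *: w) = 0.
    by apply: (addIr (normsq chi)); rewrite -e' add0r.
  have ec : chi = c *: w by apply: subr0_eq; apply: normsq_eq0.
  have cnz' : c != 0 by apply: contraNneq cnz => c0; rewrite ec c0 scale0r.
  have [k hk] := hsigma (c^-1 * a).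
  exists (k *: phi); rewrite gscale hk -scalerA -ea ec.
  by rewrite scalerK.
- right => psi.
  case: (eqVneq psi 0) => [->|hpsi]; first by rewrite g0 inner0l.
  have T0' : forall phi, proj1_sig (fu SL) phi -> phi = 0.
    move=> phi Tp; apply/eqP; apply/negPn/negP => nz; apply: hT; by exists phi; split.
  have lhs : ebar (mkray hpsi) (fu SL) = 0.
    rewrite /ebar (@hprojE _ _ _ 0) //; last by move=> s /T0' ->; rewrite inner0r.
    by rewrite normsq0 myRdivE mul0r.
  have [chi [a [b [cnz ea eb e4]]]] := rhs psi hpsi.
  have := hchu (mkray hpsi) SL; rewrite lhs e4 ?myRdivE => h.
  set c := inner chi w / inner w w in h.
  have hn : normsq (c *: w) = 0.
    by rewrite -[LHS](divfK (normsq_neq0 cnz)) -h mul0r.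
  have /eqP := normsq_eq0 hn; rewrite scaler_eq0 (negbTE wnz) orbF.
  rewrite /c mulf_eq0 invr_eq0 (negbTE ww) orbF => /eqP hc.
  by rewrite eb inner_scalel hc mulr0.
Qed.
Unset Implicit Arguments. Set Strict Implicit.

Theorem proposition3p11 (H K : hilbert)
  (hdim : exists v : H, v != 0)
  (fs : hray H -> hray K) (fu : closed_subspaces K -> closed_subspaces H)
  (hchu : chu_morphism (@ebar H) (@ebar K) fs fu)
  (sigma : {rmorphism CC -> CC}) (g : H -> K)
  (hg : semilinear_map sigma g)
  (hgnz : forall psi : H, psi != 0 -> g psi != 0)
  (hfs : forall (psi : H) (hpsi : psi != 0), proj1_sig (fs (mkray hpsi)) = hline (g psi))
  (hsigma : forall z : CC, exists w : CC, sigma w = z) :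
  forall w : K, exists v : H, g v = w.
Proof.
move=> w.
have [gadd gscale] := hg.
have g0 : g 0 = 0 by rewrite -(scale0r (0:H)) gscale rmorph0 scale0r.
have gN : forall x, g (- x) = - g x.
  by move=> x; rewrite -scaleN1r gscale rmorphN1 scaleN1r.
case: (eqVneq w 0) => [->|wnz]; first by exists 0.
have [psi0 p0] := hdim.
have Kk := key hchu hg hfs hsigma.
case: (Kk w wnz) => [//|h1].
case: (eqVneq (w + g psi0) 0) => [e|w'nz].
  by exists (- psi0); rewrite gN; apply/esym/eqP; rewrite -addr_eq0 e.
case: (Kk _ w'nz) => [[v hv]|h2].
  by exists (v - psi0); rewrite gadd gN hv addrK.
exfalso; have := h2 psi0; rewrite inner_addr h1 add0r => /inner_eq0 /eqP.
by rewrite (negbTE (hgnz _ p0)).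
Qed.
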